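(* Suppose $f$ has equal algebraic and topological degrees $d=\lambda_2\ge 2$. Let $p\in\mathbb{P}^2$ be a point such that $f(p)$ is a regular value of $f$ with $\lambda_2$ distinct $f$-preimages, all outside $\mathcal{I}$. Let $L,L'$ be lines through $p$ that do not meet $\mathcal{I}$ and have distinct images $f(L)\neq f(L')$. Then at least one of the irreducible curves $f(L)$, $f(L')$ is not a line.
   Context: $f:\mathbb{P}^2\dashrightarrow\mathbb{P}^2$ is a dominant rational map with algebraic degree $d$, topological degree $\lambda_2$ (number of preimages of a generic point) and finite indeterminacy set $\mathcal{I}$. For a curve $V$, $f(V):=\overline{f(V\setminus\mathcal{I})}$. *)

(* Defs.v *)
(* Rational maps of P^2 over an algebraically closed field
   of characteristic 0, with trivariate polynomials encoded as nested
   univariate polynomials {poly {poly {poly F}}} (variables x0 outer, x1, x2 inner). *)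
From HB Require Import structures.
From mathcomp Require Import all_boot all_order all_algebra.
Set Implicit Arguments. Unset Strict Implicit. Unset Printing Implicit Defensive.
Import Order.TTheory GRing.Theory Num.Theory.
Local Open Scope ring_scope.

Section P2.
Variable F : closedFieldType.

Definition P3 := {poly {poly {poly F}}}.
(* homogeneous coordinates of points of P^2 (nonzero triples up to scaling) *)
Definition pt := (F * F * F)%type.

Definition coef3 (p : P3) (i j k : nat) : F := ((p`_i)`_j)`_k.

(* p is homogeneous of degree e (0 counts as homogeneous of every degree) *)
Definition homog (e : nat) (p : P3) : Prop :=
  forall i j k, coef3 p i j k != 0 -> (i + j + k)%N = e.

Definition eval3 (p : P3) (v : pt) : F :=
  (map_poly (fun q : {poly {poly F}} =>
      (map_poly (fun r : {poly F} => r.[v.2]) q).[v.1.2]) p).[v.1.1].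

Definition pd (j : 'I_3) (p : P3) : P3 :=
  match val j with
  | 0 => deriv p
  | 1 => map_poly deriv p
  | _ => map_poly (map_poly deriv) p
  end.

Definition nonzero (v : pt) : Prop := v <> (0, 0, 0).

Definition scale (c : F) (v : pt) : pt := (c * v.1.1, c * v.1.2, c * v.2).

Definition projeq (v w : pt) : Prop := exists2 c : F, c != 0 & w = scale c v.

Definition lin (m v : pt) : F := m.1.1 * v.1.1 + m.1.2 * v.1.2 + m.2 * v.2.

Definition fapply (f : 'I_3 -> P3) (v : pt) : pt :=
  (eval3 (f ord0) v, eval3 (f (inord 1)) v, eval3 (f (inord 2)) v).

Definition indet (f : 'I_3 -> P3) (v : pt) : Prop := fapply f v = (0, 0, 0).

(* S (a scaling-invariant predicate on homogeneous coordinates) consists of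
   exactly n distinct points of P^2 *)
Definition proj_card (S : pt -> Prop) (n : nat) : Prop :=
  exists s : seq pt, [/\ size s = n,
    forall v, v \in s -> nonzero v /\ S v,
    forall i j, (i < size s)%N -> (j < size s)%N -> i <> j ->
       ~ projeq (nth (0,0,0) s i) (nth (0,0,0) s j) &
    forall v, nonzero v -> S v -> exists2 w, w \in s & projeq w v].

Definition finite_indet (f : 'I_3 -> P3) : Prop :=
  exists s : seq pt, forall v, nonzero v -> indet f v ->
    exists2 w, w \in s & projeq w v.

(* dominant: the image of P^2 \ I is not contained in any curve *)
Definition dominant (f : 'I_3 -> P3) : Prop :=
  forall (e : nat) (G : P3), homog e G -> G != 0 ->
    exists v, [/\ nonzero v, ~ indet f v & eval3 G (fapply f v) != 0].

(* f is a dominant rational map of algebraic degree d: the components are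
   homogeneous of degree d without nonconstant common factor *)
Definition ratmap_deg (f : 'I_3 -> P3) (d : nat) : Prop :=
  [/\ forall i, homog d (f i),
      (forall (h : P3) (q : 'I_3 -> P3), (forall i, f i = h * q i) -> homog 0 h)
    & dominant f].

Definition zclos (S : pt -> Prop) (y : pt) : Prop :=
  forall (e : nat) (G : P3), homog e G ->
    (forall v, nonzero v -> S v -> eval3 G v = 0) -> eval3 G y = 0.

(* topological degree: a generic point (outside some curve G = 0) has
   exactly lam preimages in P^2 \ I *)
Definition fiber (f : 'I_3 -> P3) (q : pt) : pt -> Prop :=
  fun x => ~ indet f x /\ projeq (fapply f x) q.

Definition topdeg (f : 'I_3 -> P3) (lam : nat) : Prop :=
  exists (e : nat) (G : P3), [/\ homog e G, G != 0 &
    forall q, nonzero q -> eval3 G q != 0 -> proj_card (fiber f q) lam].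

Definition jac (f : 'I_3 -> P3) (v : pt) : F :=
  \det (\matrix_(i < 3, j < 3) eval3 (pd j (f i)) v).

(* f(V) := closure of f(V \ I), V the line {lin l = 0} *)
Definition img_line (f : 'I_3 -> P3) (l : pt) : pt -> Prop :=
  zclos (fun y => exists x, [/\ nonzero x, lin l x = 0, ~ indet f x &
                               projeq (fapply f x) y]).

Definition sameset (A B : pt -> Prop) : Prop :=
  forall y, nonzero y -> (A y <-> B y).

Definition is_line (A : pt -> Prop) : Prop :=
  exists2 m, nonzero m & sameset A (fun y => lin m y = 0).

End P2.

(* Main.v *)
Require Import Defs.
From HB Require Import structures.
From mathcomp Require Import all_boot all_order all_algebra.
From mathcomp Require Import ring zify.
From Stdlib Require Import ClassicalEpsilon Classical.
Import GRing.Theory.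
Local Open Scope ring_scope.
Set Implicit Arguments. Unset Strict Implicit.

Lemma map_poly_MXaddC (A B : nzRingType) (g : A -> B) (g0 : g 0 = 0)
  (q : {poly A}) (a : A) :
  map_poly g (q * 'X + a%:P) = map_poly g q * 'X + (g a)%:P.
Proof.
apply/polyP=> i; rewrite coef_map_id0 // !coefD !coefMX !coefC coef_map_id0 //.
by case: i => [|i] /=; rewrite ?g0 ?add0r ?addr0.
Qed.

Lemma map_polyD_h (A B : nzRingType) (g : A -> B) (g0 : g 0 = 0)
  (gD : forall x y, g (x + y) = g x + g y) (p q : {poly A}) :
  map_poly g (p + q) = map_poly g p + map_poly g q.
Proof. by apply/polyP=> i; rewrite coefD !coef_map_id0 // coefD gD. Qed.

Lemma map_poly_addf (A B : nzRingType) (g1 g2 : A -> B) (g10 : g1 0 = 0)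
  (g20 : g2 0 = 0) (p : {poly A}) :
  map_poly (fun x => g1 x + g2 x) p = map_poly g1 p + map_poly g2 p.
Proof.
by apply/polyP=> i; rewrite coefD !coef_map_id0 // ?g10 ?g20 ?addr0.
Qed.

Lemma map_poly_mulc (A B : nzRingType) (g : A -> B) (g0 : g 0 = 0) (k : B)
  (p : {poly A}) :
  map_poly (fun x => g x * k) p = map_poly g p * k%:P.
Proof.
by apply/polyP=> i; rewrite coefMC !coef_map_id0 // ?g0 ?mul0r.
Qed.

Lemma map_poly_zero (A B : nzRingType) (p : {poly A}) :
  map_poly (fun _ : A => (0 : B)) p = 0.
Proof. by apply/polyP=> i; rewrite coef_map_id0 // coef0. Qed.

Lemma size_map_poly_le (A B : nzRingType) (g : A -> B) (g0 : g 0 = 0)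
  (p : {poly A}) : (size (map_poly g p) <= size p)%N.
Proof.
apply/leq_sizeP=> j hj; rewrite coef_map_id0 // nth_default //.
Qed.

Lemma deriv_layer (A : nzRingType) (R : comNzRingType) (g : A -> {poly R})
  (g0 : g 0 = 0) (gD : forall x y, g (x + y) = g x + g y)
  (p : {poly A}) (c : {poly R}) :
  ((map_poly g p).[c])^`() =
  (map_poly (fun x => (g x)^`()) p).[c] + (map_poly g p^`()).[c] * c^`().
Proof.
have d0 : (fun x => (g x)^`()) 0 = 0 by rewrite /= g0 deriv0.
elim/poly_ind: p => [|q a IH].
  by rewrite !map_poly0 deriv0 horner0 deriv0 map_poly0 horner0 mul0r addr0.
rewrite derivMXaddC map_poly_MXaddC // hornerMXaddC derivD derivM IH.
rewrite map_poly_MXaddC // hornerMXaddC map_polyD_h //.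
have e : map_poly g (q^`() * 'X) = map_poly g q^`() * 'X.
  by have := map_poly_MXaddC g0 q^`() 0; rewrite polyC0 !addr0 g0 polyC0 addr0.
rewrite e hornerD hornerMX.
ring.
Qed.

Lemma eval_layer (A : nzRingType) (R : comNzRingType) (g : A -> {poly R})
  (h : A -> R) (g0 : g 0 = 0) (h0 : h 0 = 0) (t : R)
  (gh : forall x, (g x).[t] = h x) (p : {poly A}) (c : {poly R}) :
  ((map_poly g p).[c]).[t] = (map_poly h p).[c.[t]].
Proof.
elim/poly_ind: p => [|q a IH]; first by rewrite !map_poly0 !horner0.
rewrite !map_poly_MXaddC // !hornerMXaddC hornerD hornerM IH gh.
by [].
Qed.

Definition g2 (F : closedFieldType) (c2 : {poly F}) (r : {poly F}) : {poly F} :=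
  (map_poly polyC r).[c2].
Definition g1 (F : closedFieldType) (c1 c2 : {poly F}) (q : {poly {poly F}}) :
  {poly F} := (map_poly (g2 c2) q).[c1].
Definition Ec (F : closedFieldType) (c0 c1 c2 : {poly F}) (P : P3 F) : {poly F} :=
  (map_poly (g1 c1 c2) P).[c0].

Lemma g2_0 (F : closedFieldType) c2 : g2 c2 (0 : {poly F}) = 0.
Proof. by rewrite /g2 map_poly0 horner0. Qed.
Lemma g2_D (F : closedFieldType) c2 (x y : {poly F}) : g2 c2 (x + y) = g2 c2 x + g2 c2 y.
Proof. by rewrite /g2 map_polyD_h ?hornerD // => *; rewrite polyCD. Qed.
Lemma g1_0 (F : closedFieldType) c1 c2 : g1 c1 c2 (0 : {poly {poly F}}) = 0.
Proof. by rewrite /g1 map_poly0 horner0. Qed.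
Lemma g1_D (F : closedFieldType) c1 c2 (x y : {poly {poly F}}) :
  g1 c1 c2 (x + y) = g1 c1 c2 x + g1 c1 c2 y.
Proof. by rewrite /g1 map_polyD_h ?hornerD //; [apply: g2_0|apply: g2_D]. Qed.

Lemma Ec_eval (F : closedFieldType) c0 c1 c2 (P : P3 F) t :
  (Ec c0 c1 c2 P).[t] = eval3 P (c0.[t], c1.[t], c2.[t]).
Proof.
rewrite /Ec /eval3 /=.
apply: eval_layer.
- exact: g1_0.
- by rewrite map_poly0 horner0.
move=> q; rewrite /g1; apply: eval_layer.
- exact: g2_0.
- by rewrite horner0.
move=> r; rewrite /g2 (eval_layer (h := id)) //; last first.
  by move=> x; rewrite hornerC.
by rewrite map_poly_id.
Qed.

Lemma Ec_deriv (F : closedFieldType) c0 c1 c2 (P : P3 F) :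
  (Ec c0 c1 c2 P)^`() = Ec c0 c1 c2 (deriv P) * c0^`()
    + Ec c0 c1 c2 (map_poly deriv P) * c1^`()
    + Ec c0 c1 c2 (map_poly (map_poly deriv) P) * c2^`().
Proof.
have d2 : forall r, (g2 c2 r)^`() = g2 c2 r^`() * c2^`().
  move=> r; rewrite /g2 deriv_layer //; last by move=> x y; rewrite polyCD.
  rewrite (eq_map_poly (g := fun _ => 0)); last by move=> x; rewrite derivC.
  by rewrite map_poly_zero horner0 add0r.
have d1 : forall q, (g1 c1 c2 q)^`() =
    g1 c1 c2 (map_poly deriv q) * c2^`() + g1 c1 c2 q^`() * c1^`().
  move=> q; rewrite /g1 deriv_layer //; [|exact: g2_0|exact: g2_D].
  rewrite (eq_map_poly d2) map_poly_mulc; last by rewrite deriv0 g2_0.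
  rewrite hornerM hornerC.
  rewrite (map_poly_comp_id0 (f := g2 c2) deriv) //; exact: g2_0.
rewrite /Ec deriv_layer //; [|exact: g1_0|exact: g1_D].
rewrite (eq_map_poly d1) map_poly_addf; last first.
- by rewrite deriv0 g1_0 mul0r.
- by rewrite map_poly0 g1_0 mul0r.
rewrite map_poly_mulc; last by rewrite ?map_poly0 ?deriv0 g1_0.
rewrite map_poly_mulc; last by rewrite ?map_poly0 ?deriv0 g1_0.
rewrite hornerD !hornerM !hornerC.
rewrite (map_poly_comp_id0 (f := g1 c1 c2) (map_poly deriv)); last exact: g1_0.
rewrite (map_poly_comp_id0 (f := g1 c1 c2) deriv); last exact: g1_0.
ring.
Qed.

Lemma homog_sizes (F : closedFieldType) (P : P3 F) d : homog d P ->
  [/\ (size P <= d.+1)%N, forall i, (size (P`_i)%R <= d.+1)%N &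
      forall i j, (size ((P`_i)`_j)%R <= d.+1)%N].
Proof.
move=> hP.
have h2 : forall i j, (size ((P`_i)`_j)%R <= d.+1)%N.
  move=> i j; apply/leq_sizeP=> k hk; apply/eqP; apply/negPn/negP=> /hP.
  rewrite /coef3; lia.
have h1 : forall i, (size (P`_i)%R <= d.+1)%N.
  move=> i; apply/leq_sizeP=> j hj; apply/polyP=> k; rewrite coef0.
  apply/eqP; apply/negPn/negP=> /hP; lia.
split=> //; apply/leq_sizeP=> i hi; apply/polyP=> j; rewrite coef0.
apply/polyP=> k; rewrite !coef0.
apply/eqP; apply/negPn/negP=> /hP; lia.
Qed.

Lemma expand (F : closedFieldType) (R : comNzRingType) (phi : F -> R)
  (phi0 : phi 0 = 0) (c0 c1 c2 : R) (P : P3 F) d : homog d P ->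
  (map_poly (fun q => (map_poly (fun r => (map_poly phi r).[c2]) q).[c1]) P).[c0]
  = \sum_(i < d.+1) \sum_(j < d.+1) \sum_(k < d.+1)
      phi (coef3 P i j k) * c2 ^+ k * c1 ^+ j * c0 ^+ i.
Proof.
move=> /homog_sizes [s0 s1 s2].
pose G2 := fun r : {poly F} => (map_poly phi r).[c2].
pose G1 := fun q : {poly {poly F}} => (map_poly G2 q).[c1].
have G20 : G2 0 = 0 by rewrite /G2 map_poly0 horner0.
have G10 : G1 0 = 0 by rewrite /G1 map_poly0 horner0.
rewrite -/G2 -/G1.
rewrite (horner_coef_wide _ (leq_trans (size_map_poly_le G10 _) s0)).
apply: eq_bigr => i _; rewrite coef_map_id0 // /G1.
rewrite (horner_coef_wide _ (leq_trans (size_map_poly_le G20 _) (s1 i))).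
rewrite mulr_suml; apply: eq_bigr => j _; rewrite coef_map_id0 // /G2.
rewrite (horner_coef_wide _ (leq_trans (size_map_poly_le phi0 _) (s2 i j))).
rewrite !mulr_suml; apply: eq_bigr => k _; rewrite coef_map_id0 //.
Qed.

Lemma eval3_expand (F : closedFieldType) (P : P3 F) d (v : pt F) : homog d P ->
  eval3 P v = \sum_(i < d.+1) \sum_(j < d.+1) \sum_(k < d.+1)
      coef3 P i j k * v.2 ^+ k * v.1.2 ^+ j * v.1.1 ^+ i.
Proof.
move=> hP; rewrite -(expand (phi := id)) //.
rewrite /eval3; congr (_.[_]); apply: eq_map_poly => q /=.
congr (_.[_]); apply: eq_map_poly => r /=.
by rewrite map_poly_id.
Qed.

Lemma Ec_expand (F : closedFieldType) (P : P3 F) d c0 c1 c2 : homog d P ->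
  Ec c0 c1 c2 P = \sum_(i < d.+1) \sum_(j < d.+1) \sum_(k < d.+1)
      (coef3 P i j k)%:P * c2 ^+ k * c1 ^+ j * c0 ^+ i.
Proof. by move=> hP; rewrite -(expand (phi := polyC)). Qed.

Lemma eval3_scale (F : closedFieldType) (P : P3 F) d (v : pt F) c : homog d P ->
  eval3 P (scale c v) = c ^+ d * eval3 P v.
Proof.
move=> hP; rewrite !(eval3_expand _ hP) mulr_sumr; apply: eq_bigr => i _.
rewrite mulr_sumr; apply: eq_bigr => j _.
rewrite mulr_sumr; apply: eq_bigr => k _.
have [->|/hP hd] := eqVneq (coef3 P i j k) 0; first by rewrite !mul0r mulr0.
have e : c ^+ d = c ^+ i * c ^+ j * c ^+ k by rewrite -!exprD hd.
rewrite /scale /= !exprMn e; ring.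
Qed.

Lemma coefM_top (R : nzSemiRingType) (p q : {poly R}) m n :
  (size p <= m.+1)%N -> (size q <= n.+1)%N -> (p * q)`_(m + n) = p`_m * q`_n.
Proof.
move=> hp hq; rewrite coefM.
have hm : (m < (m + n).+1)%N by lia.
rewrite (bigD1 (Ordinal hm)) //= big1 ?addr0; first by rewrite addKn.
move=> [j hj] /= hne; case: (ltngtP j m) => h.
- by rewrite (nth_default _ (_ : (size q <= m + n - j)%N)) ?mulr0 //; lia.
- by rewrite (nth_default _ (_ : (size p <= j)%N)) ?mul0r //; lia.
- by move: hne; rewrite -val_eqE /= h eqxx.
Qed.

Definition cl (F : closedFieldType) (x b : F) : {poly F} := x%:P + b *: 'X.

Lemma cl_size (F : closedFieldType) (x b : F) : (size (cl x b) <= 2)%N.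
Proof.
rewrite /cl; apply/leq_sizeP => j hj.
rewrite coefD coefC coefZ coefX; case: j hj => [|[|j]] //= _; by rewrite mulr0 addr0.
Qed.

Lemma cl_pow (F : closedFieldType) (x b : F) k :
  (size (cl x b ^+ k) <= k.+1)%N /\ (cl x b ^+ k)`_k = b ^+ k.
Proof.
elim: k => [|k [IH1 IH2]].
  by rewrite !expr0 size_poly1 coef1.
rewrite exprSr; split.
  apply: leq_trans (size_polyMleq _ _) _; have := cl_size x b; lia.
rewrite -addn1 (coefM_top IH1 (cl_size x b)) IH2 /cl coefD coefC coefZ coefX /=.
by rewrite mulr1 add0r addn1 exprSr.
Qed.

Lemma cl_mon (F : closedFieldType) (a b : pt F) i j k :
  let c0 := cl a.1.1 b.1.1 in let c1 := cl a.1.2 b.1.2 in let c2 := cl a.2 b.2 in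
  (size (c2 ^+ k * c1 ^+ j * c0 ^+ i)%R <= (k + j + i).+1)%N /\
  (c2 ^+ k * c1 ^+ j * c0 ^+ i)`_(k + j + i) = b.2 ^+ k * b.1.2 ^+ j * b.1.1 ^+ i.
Proof.
move=> c0 c1 c2.
have [s0 e0] := cl_pow a.1.1 b.1.1 i.
have [s1 e1] := cl_pow a.1.2 b.1.2 j.
have [s2 e2] := cl_pow a.2 b.2 k.
have s21 : (size (c2 ^+ k * c1 ^+ j)%R <= (k + j).+1)%N.
  apply: leq_trans (size_polyMleq _ _) _; move: s1 s2; rewrite /c1 /c2; lia.
split.
  apply: leq_trans (size_polyMleq _ _) _; move: s21 s0; rewrite /c0; lia.
by rewrite (coefM_top s21 s0) (coefM_top s2 s1) e0 e1 e2.
Qed.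

Lemma Ec_top (F : closedFieldType) (P : P3 F) d (a b : pt F) : homog d P ->
  (size (Ec (cl a.1.1 b.1.1) (cl a.1.2 b.1.2) (cl a.2 b.2) P) <= d.+1)%N /\
  (Ec (cl a.1.1 b.1.1) (cl a.1.2 b.1.2) (cl a.2 b.2) P)`_d = eval3 P b.
Proof.
have e4 : forall c X Y Z : {poly F}, c * X * Y * Z = c * (X * Y * Z).
  by move=> *; rewrite !mulrA.
move=> hP; rewrite (Ec_expand _ _ _ hP) (eval3_expand _ hP); split.
  apply/leq_sizeP => n hn; rewrite !coef_sum; apply: big1 => i _.
  rewrite !coef_sum; apply: big1 => j _.
  rewrite !coef_sum; apply: big1 => k _.
  have [->|/hP hd] := eqVneq (coef3 P i j k) 0; first by rewrite !mul0r coef0.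
  rewrite e4 coefCM.
  have [hs _] := cl_mon a b i j k.
  rewrite (nth_default _ (leq_trans hs _)) ?mulr0 //; lia.
rewrite !coef_sum; apply: eq_bigr => i _.
rewrite !coef_sum; apply: eq_bigr => j _.
rewrite !coef_sum; apply: eq_bigr => k _.
have [->|/hP hd] := eqVneq (coef3 P i j k) 0; first by rewrite !mul0r coef0.
rewrite e4 coefCM.
have [_] := cl_mon a b i j k; rewrite (_ : (k + j + i = d)%N); last by lia.
by move=> ->; rewrite !mulrA.
Qed.

Definition cross (F : closedFieldType) (u v : pt F) : pt F :=
  (u.1.2 * v.2 - u.2 * v.1.2, u.2 * v.1.1 - u.1.1 * v.2, u.1.1 * v.1.2 - u.1.2 * v.1.1).

Definition comb (F : closedFieldType) (al : F) (u : pt F) (be : F) (v : pt F) : pt F :=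
  (al * u.1.1 + be * v.1.1, al * u.1.2 + be * v.1.2, al * u.2 + be * v.2).

Lemma pt_eq (F : closedFieldType) (u v : pt F) :
  u.1.1 = v.1.1 -> u.1.2 = v.1.2 -> u.2 = v.2 -> u = v.
Proof. by case: u => [[a b] c]; case: v => [[a' b'] c'] /= -> -> ->. Qed.

Lemma pt0 (F : closedFieldType) (u : pt F) :
  u <> (0,0,0) -> [\/ u.1.1 != 0, u.1.2 != 0 | u.2 != 0].
Proof.
case: u => [[a b] c] /= h.
have [a0|] := eqVneq a 0; last by constructor 1.
have [b0|] := eqVneq b 0; last by constructor 2.
have [c0|] := eqVneq c 0; last by constructor 3.
by case: h; rewrite a0 b0 c0.
Qed.

Lemma lin_scale (F : closedFieldType) (l v : pt F) c : lin l (scale c v) = c * lin l v.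
Proof. rewrite /lin /scale /=; ring. Qed.

Lemma projeq_sym (F : closedFieldType) (u v : pt F) : projeq u v -> projeq v u.
Proof.
case=> c hc ->; exists c^-1; first by rewrite invr_eq0.
by apply: pt_eq; rewrite /scale /= mulrA mulVf ?mul1r.
Qed.

Lemma projeq_trans (F : closedFieldType) (u v w : pt F) :
  projeq u v -> projeq v w -> projeq u w.
Proof.
case=> c hc ->; case=> e he ->; exists (e * c); first by rewrite mulf_neq0.
by apply: pt_eq; rewrite /scale /= mulrA.
Qed.

Lemma cross_zero (F : closedFieldType) (u v : pt F) :
  nonzero u -> cross u v = (0,0,0) -> exists c, v = scale c u.
Proof.
case: u => [[u0 u1] u2]; case: v => [[v0 v1] v2]; rewrite /nonzero /cross /=.
move=> /pt0 /= hu [e1 e2 e3].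
case: hu => hu.
- exists (v0 / u0); apply: pt_eq; rewrite /scale /=; apply/eqP; rewrite -subr_eq0.
  + by apply/eqP; field.
  + have -> : v1 - v0 / u0 * u1 = (u0 * v1 - u1 * v0) / u0 by field.
    by rewrite e3 mul0r.
  + have -> : v2 - v0 / u0 * u2 = - (u2 * v0 - u0 * v2) / u0 by field.
    by rewrite e2 oppr0 mul0r.
- exists (v1 / u1); apply: pt_eq; rewrite /scale /=; apply/eqP; rewrite -subr_eq0.
  + have -> : v0 - v1 / u1 * u0 = - (u0 * v1 - u1 * v0) / u1 by field.
    by rewrite e3 oppr0 mul0r.
  + by apply/eqP; field.
  + have -> : v2 - v1 / u1 * u2 = (u1 * v2 - u2 * v1) / u1 by field.
    by rewrite e1 mul0r.
- exists (v2 / u2); apply: pt_eq; rewrite /scale /=; apply/eqP; rewrite -subr_eq0.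
  + have -> : v0 - v2 / u2 * u0 = (u2 * v0 - u0 * v2) / u2 by field.
    by rewrite e2 mul0r.
  + have -> : v1 - v2 / u2 * u1 = - (u1 * v2 - u2 * v1) / u2 by field.
    by rewrite e1 oppr0 mul0r.
  + by apply/eqP; field.
Qed.

Lemma cross_scale (F : closedFieldType) (u : pt F) c : cross u (scale c u) = (0,0,0).
Proof. by apply: pt_eq; rewrite /cross /scale /=; ring. Qed.

Lemma lin_cross (F : closedFieldType) (w u v : pt F) :
  lin w u = 0 -> lin w v = 0 -> nonzero (cross u v) ->
  exists c, w = scale c (cross u v).
Proof.
move=> hu hv hn; apply: cross_zero => //.
have e : cross (cross u v) w =
  (v.1.1 * lin w u - u.1.1 * lin w v, v.1.2 * lin w u - u.1.2 * lin w v,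
   v.2 * lin w u - u.2 * lin w v).
  by apply: pt_eq; rewrite /cross /lin /=; ring.
by rewrite e hu hv !mulr0 subrr.
Qed.

Lemma projeq_cross (F : closedFieldType) (u v : pt F) : projeq u v -> cross u v = (0,0,0).
Proof. by case=> c _ ->; apply: cross_scale. Qed.

Lemma nonprojeq_cross (F : closedFieldType) (u v : pt F) :
  nonzero u -> nonzero v -> ~ projeq u v -> nonzero (cross u v).
Proof.
move=> hu hv hp hc; have [c ec] := cross_zero hu hc; apply: hp; exists c => //.
apply/eqP => c0; apply: hv; rewrite ec c0; apply: pt_eq; rewrite /scale /=; ring.
Qed.

Lemma cross_comb (F : closedFieldType) (a b : pt F) al be :
  cross (comb al a be b) b = scale al (cross a b) /\
  cross a (comb al a be b) = scale be (cross a b).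
Proof. by split; apply: pt_eq; rewrite /cross /comb /scale /=; ring. Qed.

Lemma scale_nz (F : closedFieldType) (c : F) (u : pt F) :
  nonzero u -> scale c u = (0,0,0) -> c = 0.
Proof.
move=> /pt0 hu; rewrite /scale => -[h1 h2 h3].
by case: hu => /negPf hu; apply/eqP; rewrite -[_ == _]orbF -hu -mulf_eq0 ?h1 ?h2 ?h3.
Qed.

Lemma comb_indep (F : closedFieldType) (a b : pt F) al be :
  nonzero (cross a b) -> comb al a be b = (0,0,0) -> al = 0 /\ be = 0.
Proof.
move=> hn h0; have [e1 e2] := cross_comb a b al be.
have z1 : cross (0,0,0) b = (0,0,0) by apply: pt_eq; rewrite /cross /=; ring.
have z2 : cross a (0,0,0) = (0,0,0) by apply: pt_eq; rewrite /cross /=; ring.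
split; apply: (scale_nz hn).
- by rewrite -e1 h0 z1.
- by rewrite -e2 h0 z2.
Qed.

Lemma natr_inj0 (F : closedFieldType) (hchar : [pchar F] =i pred0) (i j : nat) :
  (i%:R : F) = j%:R -> i = j.
Proof.
have hc := (pcharf0P F).1 hchar.
wlog hij : i j / (i <= j)%N.
  move=> W e; have [h|h] := leqP i j; first exact: W.
  by apply/esym/W => //; apply: ltnW.
move=> e; have : ((j - i)%:R : F) == 0 by rewrite natrB // e subrr.
rewrite hc subn_eq0 => hji; apply/eqP; by rewrite eqn_leq hij hji.
Qed.

Lemma poly_zero_all (F : closedFieldType) (hchar : [pchar F] =i pred0) (p : {poly F}) :
  (forall t, p.[t] = 0) -> p = 0.
Proof.
move=> h; apply/eqP; apply: contraT => hp.
have := max_poly_roots (rs := [seq i%:R | i <- iota 0 (size p)]) hp.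
rewrite size_map size_iota ltnn; apply.
- by apply/allP => x /mapP [i _ ->]; apply/rootP.
- rewrite map_inj_uniq ?iota_uniq // => i j; exact: natr_inj0.
Qed.

Lemma proj_card_le (F : closedFieldType) (S : pt F -> Prop) n (ys : seq (pt F)) :
  proj_card S n -> (forall y, y \in ys -> nonzero y /\ S y) ->
  (forall i j, (i < size ys)%N -> (j < size ys)%N -> i <> j ->
     ~ projeq (nth (0,0,0) ys i) (nth (0,0,0) ys j)) ->
  (size ys <= n)%N.
Proof.
case=> s [hs _ _ hcov] hy hp.
have ex : forall i : 'I_(size ys), exists k : 'I_(size s),
    projeq (nth (0,0,0) s k) (nth (0,0,0) ys i).
  move=> i; have yi := mem_nth (0,0,0) (ltn_ord i).
  have [nz Sy] := hy _ yi; have [w ws pw] := hcov _ nz Sy.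
  have hw : (index w s < size s)%N by rewrite index_mem.
  by exists (Ordinal hw); rewrite /= nth_index.
pose f i := proj1_sig (constructive_indefinite_description _ (ex i)).
have finj : injective f.
  move=> i j e; apply/eqP; apply: contraT => hne.
  have pi := proj2_sig (constructive_indefinite_description _ (ex i)).
  have pj := proj2_sig (constructive_indefinite_description _ (ex j)).
  rewrite -/(f i) -/(f j) in pi pj; rewrite e in pi.
  suff : False by []; apply: (hp i j (ltn_ord i) (ltn_ord j)).
    by move=> ev; move: hne; rewrite -val_eqE /= ev eqxx.
  exact: projeq_trans (projeq_sym pi) pj.
by rewrite -hs; have := leq_card _ finj; rewrite !card_ord.
Qed.

Definition f1 (F : closedFieldType) (f : 'I_3 -> P3 F) := f (inord 1).
Definition hpoly (F : closedFieldType) (f : 'I_3 -> P3 F) (m a b : pt F) : {poly F} :=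
  let E := Ec (cl a.1.1 b.1.1) (cl a.1.2 b.1.2) (cl a.2 b.2) in
  m.1.1 *: E (f ord0) + m.1.2 *: E (f (inord 1)) + m.2 *: E (f (inord 2)).

Definition dP (F : closedFieldType) (P : P3 F) (x b : pt F) : F :=
  eval3 (deriv P) x * b.1.1 + eval3 (map_poly deriv P) x * b.1.2
  + eval3 (map_poly (map_poly deriv) P) x * b.2.

Definition dir (F : closedFieldType) (f : 'I_3 -> P3 F) (x b : pt F) : pt F :=
  (dP (f ord0) x b, dP (f (inord 1)) x b, dP (f (inord 2)) x b).

Definition Wv (F : closedFieldType) (f : 'I_3 -> P3 F) (x m : pt F) : pt F :=
  (m.1.1 * eval3 (deriv (f ord0)) x + m.1.2 * eval3 (deriv (f (inord 1))) x
     + m.2 * eval3 (deriv (f (inord 2))) x,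
   m.1.1 * eval3 (map_poly deriv (f ord0)) x
     + m.1.2 * eval3 (map_poly deriv (f (inord 1))) x
     + m.2 * eval3 (map_poly deriv (f (inord 2))) x,
   m.1.1 * eval3 (map_poly (map_poly deriv) (f ord0)) x
     + m.1.2 * eval3 (map_poly (map_poly deriv) (f (inord 1))) x
     + m.2 * eval3 (map_poly (map_poly deriv) (f (inord 2))) x).

Lemma lin_dir (F : closedFieldType) (f : 'I_3 -> P3 F) (x m b : pt F) :
  lin m (dir f x b) = lin (Wv f x m) b.
Proof. by rewrite /lin /dir /Wv /dP /=; ring. Qed.

Lemma cl_horner (F : closedFieldType) (x b t : F) : (cl x b).[t] = x + t * b.
Proof. by rewrite /cl hornerD hornerC hornerZ hornerX mulrC. Qed.

Lemma cl_deriv (F : closedFieldType) (x b : F) : (cl x b)^`() = b%:P.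
Proof. by rewrite /cl derivD derivC derivZ derivX add0r alg_polyC. Qed.

Lemma comb1E (F : closedFieldType) (a b : pt F) t :
  comb 1 a t b = (a.1.1 + t * b.1.1, a.1.2 + t * b.1.2, a.2 + t * b.2).
Proof. by apply: pt_eq; rewrite /comb /= !mul1r. Qed.

Lemma hpoly_eval (F : closedFieldType) (f : 'I_3 -> P3 F) (m a b : pt F) t :
  (hpoly f m a b).[t] = lin m (fapply f (comb 1 a t b)).
Proof.
by rewrite /hpoly /= !hornerD !hornerZ !Ec_eval !cl_horner comb1E.
Qed.

Lemma hpoly_deriv (F : closedFieldType) (f : 'I_3 -> P3 F) (m a b : pt F) t :
  (hpoly f m a b)^`().[t] = lin m (dir f (comb 1 a t b) b).
Proof.
rewrite /hpoly /= !derivD !derivZ !Ec_deriv !cl_deriv.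
rewrite !hornerD !hornerZ !hornerD !hornerM !hornerC !Ec_eval !cl_horner comb1E.
by rewrite /lin /dir /dP /=.
Qed.

Lemma hpoly_top (F : closedFieldType) (f : 'I_3 -> P3 F) d (m a b : pt F) :
  (forall i, homog d (f i)) ->
  (size (hpoly f m a b) <= d.+1)%N /\ (hpoly f m a b)`_d = lin m (fapply f b).
Proof.
move=> hom.
have [s0 e0] := Ec_top a b (hom ord0).
have [s1 e1] := Ec_top a b (hom (inord 1)).
have [s2 e2] := Ec_top a b (hom (inord 2)).
split; last by rewrite /hpoly /= !coefD !coefZ e0 e1 e2.
apply/leq_sizeP => n hn; rewrite /hpoly /= !coefD !coefZ.
by rewrite !(nth_default _ (leq_trans _ hn)) ?mulr0 ?addr0.
Qed.

Lemma fapply_scale (F : closedFieldType) (f : 'I_3 -> P3 F) d (v : pt F) c :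
  (forall i, homog d (f i)) -> fapply f (scale c v) = scale (c ^+ d) (fapply f v).
Proof. by move=> hom; apply: pt_eq; rewrite /fapply /scale /= !(eval3_scale _ _ (hom _)). Qed.

Definition comp3 (F : closedFieldType) (r : pt F) (i : 'I_3) : F :=
  match nat_of_ord i with 0 => r.1.1 | 1 => r.1.2 | _ => r.2 end.

Lemma Wv_jac (F : closedFieldType) (f : 'I_3 -> P3 F) (x r : pt F) :
  nonzero r -> Wv f x r = (0,0,0) -> jac f x = 0.
Proof.
move=> hr hW; apply/eqP/det0P; exists (\row_i comp3 r i).
  apply/eqP => /rowP h; apply: hr; apply: pt_eq.
  - by have := h ord0; rewrite !mxE.
  - by have := h (inord 1); rewrite !mxE /comp3 inordK.
  - by have := h (inord 2); rewrite !mxE /comp3 inordK.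
have e1 : (lift ord0 ord0 : 'I_3) = inord 1 by apply/val_inj; rewrite /= inordK.
have e2 : (lift ord0 (lift ord0 ord0) : 'I_3) = inord 2 by apply/val_inj; rewrite /= inordK.
apply/rowP => j; rewrite !mxE !big_ord_recl big_ord0 !mxE addr0 e1 e2.
rewrite /comp3 !inordK //=.
move: hW; rewrite /Wv => -[h0 h1 h2].
case: j => [[|[|[|j]]] hj] //=.
- by rewrite /pd /= addrA h0.
- by rewrite /pd /= addrA h1.
- by rewrite /pd /= addrA h2.
Qed.

Lemma lin_comb (F : closedFieldType) (l a b : pt F) al be :
  lin l (comb al a be b) = al * lin l a + be * lin l b.
Proof. by rewrite /lin /comb /=; ring. Qed.

Lemma lin_sym (F : closedFieldType) (u v : pt F) : lin u v = lin v u.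
Proof. by rewrite /lin; ring. Qed.

Lemma lin_scalel (F : closedFieldType) (w y : pt F) c : lin (scale c w) y = c * lin w y.
Proof. by rewrite /lin /scale /=; ring. Qed.

Lemma cross0l (F : closedFieldType) (v : pt F) : cross (0,0,0) v = (0,0,0).
Proof. by apply: pt_eq; rewrite /cross /=; ring. Qed.

Lemma cross_nzl (F : closedFieldType) (u v : pt F) : nonzero (cross u v) -> nonzero u.
Proof. by move=> h hu; apply: h; rewrite hu cross0l. Qed.

Lemma cross_anti (F : closedFieldType) (u v : pt F) : cross v u = scale (-1) (cross u v).
Proof. by apply: pt_eq; rewrite /cross /scale /=; ring. Qed.

Lemma scale_nonzero (F : closedFieldType) (c : F) (u : pt F) :
  c != 0 -> nonzero u -> nonzero (scale c u).
Proof. by move=> hc hu h; move: hc; rewrite (scale_nz hu h) eqxx. Qed.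

Lemma scale1 (F : closedFieldType) (u : pt F) : scale 1 u = u.
Proof. by apply: pt_eq; rewrite /scale /= mul1r. Qed.

Lemma cross_comb2 (F : closedFieldType) (a b : pt F) s t :
  cross (comb 1 a s b) (comb 1 a t b) = scale (t - s) (cross a b).
Proof. by apply: pt_eq; rewrite /cross /comb /scale /=; ring. Qed.

Lemma comb_nz (F : closedFieldType) (a b : pt F) t :
  nonzero (cross a b) -> nonzero (comb 1 a t b).
Proof. by move=> h h0; have [/eqP] := comb_indep h h0; rewrite oner_eq0. Qed.

Lemma distinct_combs (F : closedFieldType) (a b : pt F) s t :
  nonzero (cross a b) -> projeq (comb 1 a s b) (comb 1 a t b) -> s = t.
Proof.
move=> h /projeq_cross; rewrite cross_comb2 => /(scale_nz h) /eqP.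
by rewrite subr_eq0 => /eqP.
Qed.

Lemma Wv_comb (F : closedFieldType) (f : 'I_3 -> P3 F) (x m m' : pt F) al be :
  Wv f x (comb al m be m') = comb al (Wv f x m) be (Wv f x m').
Proof. by apply: pt_eq; rewrite /Wv /comb /=; ring. Qed.

Lemma key (F : closedFieldType) (f : 'I_3 -> P3 F) (x b m m' : pt F) :
  nonzero (cross x b) -> nonzero (cross m m') -> jac f x != 0 ->
  lin (Wv f x m) x = 0 -> lin (Wv f x m) b = 0 -> lin (Wv f x m') x = 0 ->
  lin (Wv f x m') b != 0.
Proof.
move=> hxb hmm hj h1 h2 h3; apply/eqP => h4.
have [al ea] := lin_cross h1 h2 hxb.
have [be eb] := lin_cross h3 h4 hxb.
suff J0 : jac f x = 0 by move: hj; rewrite J0 eqxx.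
have [/andP[a0 b0]|hab] := boolP ((al == 0) && (be == 0)).
  apply: (Wv_jac (r := m)); first exact: cross_nzl hmm.
  by rewrite ea (eqP a0); apply: pt_eq; rewrite /scale /= !mul0r.
apply: (Wv_jac (r := comb be m (- al) m')).
  move=> h0; have [e1 e2] := comb_indep hmm h0; move: hab.
  by rewrite e1 -(opprK al) e2 oppr0 !eqxx.
by rewrite Wv_comb ea eb; apply: pt_eq; rewrite /comb /scale /=; ring.
Qed.

Lemma euler (F : closedFieldType) (hchar : [pchar F] =i pred0)
  (f : 'I_3 -> P3 F) d (x m : pt F) :
  (forall i, homog d (f i)) -> lin m (fapply f x) = 0 -> lin (Wv f x m) x = 0.
Proof.
move=> hom h.
have k0 : hpoly f m x x = 0.
  apply: poly_zero_all => // t; rewrite hpoly_eval.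
  have -> : comb 1 x t x = scale (1 + t) x.
    by apply: pt_eq; rewrite /comb /scale /=; ring.
  by rewrite (fapply_scale _ _ hom) lin_scale h mulr0.
have := hpoly_deriv f m x x 0; rewrite k0 deriv0 horner0 lin_dir.
have -> : comb 1 x 0 x = x by apply: pt_eq; rewrite /comb /=; ring.
by move=> <-.
Qed.

Lemma line_deriv (F : closedFieldType) (hchar : [pchar F] =i pred0)
  (f : 'I_3 -> P3 F) (a b m : pt F) :
  (forall t, lin m (fapply f (comb 1 a t b)) = 0) ->
  forall z, lin (Wv f (comb 1 a z b) m) b = 0.
Proof.
move=> h z.
have k0 : hpoly f m a b = 0 by apply: poly_zero_all => // t; rewrite hpoly_eval.
by have := hpoly_deriv f m a b z; rewrite k0 deriv0 horner0 lin_dir => <-.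
Qed.

Lemma not_uniq_perm (T : eqType) (s : seq T) :
  ~~ uniq s -> exists z rest, perm_eq s (z :: z :: rest).
Proof.
elim: s => [|x s IH] //=; rewrite negb_and negbK.
case/orP => [xs|/IH [z [rest hp]]].
  by exists x, (rem x s); rewrite perm_cons; apply: perm_to_rem.
exists z, (x :: rest).
apply: perm_trans (_ : perm_eq _ (x :: z :: z :: rest)) _; first by rewrite perm_cons.
by rewrite -[x :: z :: z :: rest]/([:: x] ++ [:: z; z] ++ rest) perm_catCA.
Qed.

Lemma line_basis (F : closedFieldType) (l : pt F) : nonzero l ->
  exists u v, [/\ lin l u = 0, lin l v = 0 & nonzero (cross u v)].
Proof.
case: l => [[l0 l1] l2] /pt0 /= [h|h|h].
- exists (- l1, l0, 0), (- l2, 0, l0); split; try by rewrite /lin /=; ring.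
  move/(congr1 (fun w : pt F => w.1.1)); rewrite /cross /= => e.
  have : l0 * l0 == 0 by apply/eqP; rewrite -e; ring.
  by rewrite mulf_eq0 orbb (negbTE h).
- exists (l1, - l0, 0), (0, - l2, l1); split; try by rewrite /lin /=; ring.
  move/(congr1 (fun w : pt F => w.1.2)); rewrite /cross /= => e.
  have : - (l1 * l1) = 0 by rewrite -e; ring.
  by move/eqP; rewrite oppr_eq0 mulf_eq0 orbb (negbTE h).
- exists (l2, 0, - l0), (0, l2, - l1); split; try by rewrite /lin /=; ring.
  move/(congr1 (fun w : pt F => w.2)); rewrite /cross /= => e.
  have : l2 * l2 == 0 by apply/eqP; rewrite -e; ring.
  by rewrite mulf_eq0 orbb (negbTE h).
Qed.

Lemma line_fiber (F : closedFieldType) (hchar : [pchar F] =i pred0)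
  (f : 'I_3 -> P3 F) d (hom : forall i, homog d (f i)) (S : pt F -> Prop)
  (l m m' : pt F) :
  nonzero l -> nonzero (cross m m') ->
  (forall y, nonzero y -> lin l y = 0 -> lin m (fapply f y) = 0) ->
  (forall y, nonzero y -> lin l y = 0 -> lin m' (fapply f y) = 0 -> S y) ->
  proj_card S d ->
  (forall x, nonzero x -> S x -> jac f x != 0) ->
  forall z, nonzero z -> S z -> lin l z = 0.
Proof.
move=> hl hmm H2 H3 hcard hjac.
have [u [v [hu hv huv]]] := line_basis hl.
have lc : forall (a b : pt F) al be, lin l a = 0 -> lin l b = 0 ->
    lin l (comb al a be b) = 0.
  by move=> a b al be ha hb; rewrite lin_comb ha hb !mulr0 addr0.
have [t0 ht0] : exists t, lin m' (fapply f (comb 1 u t v)) != 0.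
  apply: NNPP => hne.
  have hall : forall t, lin m' (fapply f (comb 1 u t v)) = 0.
    by move=> t; apply/eqP/negPn/negP => H; apply: hne; exists t.
  have := proj_card_le (ys := [seq comb 1 u i%:R v | i <- iota 0 d.+1]) hcard.
  rewrite size_map size_iota ltnn => HH; suff : false by []; apply: HH.
  - move=> y /mapP [i _ ->]; split; first exact: comb_nz.
    by apply: H3; [exact: comb_nz| exact: lc| exact: hall].
  - move=> i j hi hj hij.
    rewrite !(nth_map 0%N _ (fun i0 : nat => comb 1 u i0%:R v)) ?size_iota //.
    rewrite !nth_iota // !add0n.
    by move/(distinct_combs huv)/(natr_inj0 hchar).
set a := v; set b := comb 1 u t0 v.
have hab : nonzero (cross a b).
  rewrite /a /b cross_anti (proj1 (cross_comb u v 1 t0)) scale1.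
  by apply: scale_nonzero => //; rewrite oppr_eq0 oner_eq0.
have la : lin l a = 0 by [].
have lb : lin l b = 0 by apply: lc.
have onL : forall t, lin l (comb 1 a t b) = 0 by move=> t; apply: lc.
have nzP : forall t, nonzero (comb 1 a t b) by move=> t; apply: comb_nz.
pose h := hpoly f m' a b.
have [hs hd] := hpoly_top m' a b hom.
have hdn : h`_d != 0 by rewrite /h hd.
have hn0 : h != 0 by apply: contra hdn => /eqP ->; rewrite coef0.
have sz : size h = d.+1.
  apply/eqP; rewrite eqn_leq hs /=; apply: contraT; rewrite -leqNgt => hle.
  by move: hdn; rewrite nth_default ?eqxx.
have [rs hrs] := closed_field_poly_normal h.
have hlc : lead_coef h != 0 by rewrite lead_coef_eq0.
have srs : size rs = d.
  have := sz; rewrite hrs size_scale // size_prod_XsubC; by case.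
have roots : forall z, z \in rs -> h.[z] = 0.
  by move=> z zr; apply/rootP; rewrite hrs rootZ // root_prod_XsubC.
have Hm : forall t, lin m (fapply f (comb 1 a t b)) = 0 by move=> t; apply: H2.
have urs : uniq rs.
  apply: contraT => /not_uniq_perm [z [rest hp]].
  pose x := comb 1 a z b.
  have zr : z \in rs by rewrite (perm_mem hp) mem_head.
  have hz : h.[z] = 0 by apply: roots.
  have hx1 : lin m' (fapply f x) = 0 by rewrite -hpoly_eval.
  have Sx : S x by apply: H3 => //; [exact: nzP|exact: onL].
  have hdz : h^`().[z] = 0.
    have ep : \prod_(j <- z :: z :: rest) ('X - j%:P) =
      ('X - z%:P) * (('X - z%:P) * \prod_(j <- rest) ('X - j%:P)) :> {poly F}.
      by rewrite !big_cons.
    rewrite hrs (perm_big _ hp) /= ep derivZ hornerZ derivM !hornerD.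
    rewrite !(hornerM (R:=F)) !hornerXsubC subrr !mul0r !mulr0 !addr0; exact: mulr0.
  have := key (x := x) (b := b) (m := m) (m' := m') (f := f).
  have hxb : nonzero (cross x b) by rewrite /x (proj1 (cross_comb a b 1 z)) scale1.
  move=> /(_ hxb hmm (hjac _ (nzP z) Sx)).
  rewrite (euler hchar hom (H2 _ (nzP z) (onL z))) (line_deriv hchar Hm z).
  rewrite (euler hchar hom hx1).
  by rewrite -lin_dir -hpoly_deriv hdz eqxx => /(_ erefl erefl erefl).
pose ys := [seq comb 1 a z b | z <- rs].
move=> z0 nz0 Sz0; apply/eqP; apply: contraT => hlz.
have := proj_card_le (ys := z0 :: ys) hcard.
rewrite /= size_map srs ltnn => HH; suff : false by []; apply: HH.
- move=> y; rewrite inE => /orP [/eqP ->|/mapP [z zr ->]]; first by [].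
  split; first exact: nzP.
  by apply: H3 => //; rewrite -hpoly_eval roots.
- move=> [|i] [|j] //= hi hj hij; rewrite ?ltnS in hi hj.
  + rewrite /ys (nth_map 0 _ (fun z : F => comb 1 a z b)); last by rewrite srs.
    case=> c hc e.
    have := onL (nth 0 rs j); rewrite e lin_scale => /eqP.
    rewrite mulf_eq0 (negbTE hc) /= => /eqP hz.
    by move: hlz; rewrite hz eqxx.
  + rewrite /ys (nth_map 0 _ (fun z : F => comb 1 a z b)); last by rewrite srs.
    case=> c hc e; move: hlz; rewrite e lin_scale onL mulr0 eqxx.
    by [].
  + rewrite /ys !(nth_map 0 _ (fun z : F => comb 1 a z b)) ?srs //.
    move/(distinct_combs hab)/eqP; rewrite nth_uniq ?srs //.
    by move/eqP => eij; apply: hij; rewrite eij.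
Qed.

Lemma zclos_mono (F : closedFieldType) (S S' : pt F -> Prop) y :
  (forall x, nonzero x -> S x -> S' x) -> zclos S y -> zclos S' y.
Proof. by move=> hsub hz e G hG hv; apply: (hz e G hG) => v hv1 hv2; apply: hv hv1 (hsub _ hv1 hv2). Qed.

Unset Implicit Arguments.

Theorem mainTheorem5 (F : closedFieldType) (hchar : [pchar F] =i pred0)
  (f : 'I_3 -> P3 F) (d : nat) :
  ratmap_deg f d -> finite_indet f ->
  topdeg f d -> (2 <= d)%N ->
  forall p : pt F, nonzero p -> ~ indet f p ->
  (* f(p) is a regular value with d = lambda_2 distinct preimages outside I *)
  proj_card (fiber f (fapply f p)) d ->
  (forall x, nonzero x -> fiber f (fapply f p) x -> jac f x != 0) ->
  forall l l' : pt F, nonzero l -> nonzero l' ->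
  lin l p = 0 -> lin l' p = 0 ->
  (forall x, nonzero x -> lin l x = 0 -> ~ indet f x) ->
  (forall x, nonzero x -> lin l' x = 0 -> ~ indet f x) ->
  ~ sameset (img_line f l) (img_line f l') ->
  ~ is_line (img_line f l) \/ ~ is_line (img_line f l').
Proof.
move=> [hom _ _] _ _ hd2 p hpnz hpind hcard hjac l l' hl hl' hlp hl'p hLi hL'i hns.
case: (classic (is_line (img_line f l))) => [[m hm hA]|]; last by left.
case: (classic (is_line (img_line f l'))) => [[m' hm' hB]|]; last by right.
exfalso.
have img : forall k n : pt F, sameset (img_line f k) (fun y => lin n y = 0) ->
    (forall x, nonzero x -> lin k x = 0 -> ~ indet f x) ->
    forall y, nonzero y -> lin k y = 0 -> lin n (fapply f y) = 0.
  move=> k n hs hk y hy hky; apply/(hs _ (hk y hy hky)).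
  move=> e G hG hv; apply: hv; first exact: hk y hy hky.
  exists y; split=> //; first exact: hk y hy hky.
  by exists 1; [exact: oner_neq0 | rewrite scale1].
have hmm : nonzero (cross m m').
  move=> h0; apply: hns; have [c ec] := cross_zero hm h0.
  have hc : c != 0.
    apply/eqP => c0; apply: hm'; rewrite ec c0; apply: pt_eq; rewrite /scale /=; ring.
  move=> y hy; split=> H.
    apply/(hB y hy); have := (hA y hy).1 H; rewrite ec lin_scalel => ->; ring.
  apply/(hA y hy); have := (hB y hy).1 H; rewrite ec lin_scalel => /eqP.
  by rewrite mulf_eq0 (negbTE hc) => /eqP.
have hmm' : nonzero (cross m' m).
  by rewrite cross_anti; apply: scale_nonzero => //; rewrite oppr_eq0 oner_eq0.
set fp := fapply f p.
have fpnz : nonzero fp := hpind.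
have fm : lin m fp = 0 := img l m hA hLi p hpnz hlp.
have fm' : lin m' fp = 0 := img l' m' hB hL'i p hpnz hl'p.
have fibgen : forall k n1 n2 : pt F,
    (forall x, nonzero x -> lin k x = 0 -> ~ indet f x) ->
    (forall y, nonzero y -> lin k y = 0 -> lin n1 (fapply f y) = 0) ->
    lin n1 fp = 0 -> lin n2 fp = 0 -> nonzero (cross n1 n2) ->
    forall y, nonzero y -> lin k y = 0 -> lin n2 (fapply f y) = 0 ->
    fiber f fp y.
  move=> k n1 n2 hk himg h1 h2 hn y hy hky hn2; split; first exact: hk.
  have hn1 := himg y hy hky.
  have [c1 e1] : exists c, fapply f y = scale c (cross n1 n2).
    by apply: lin_cross => //; rewrite lin_sym.
  have [c2 e2] : exists c, fp = scale c (cross n1 n2).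
    by apply: lin_cross => //; rewrite lin_sym.
  have nz1 : c1 != 0.
    apply/eqP => c0; apply: (hk y hy hky); rewrite /indet e1 c0.
    by apply: pt_eq; rewrite /scale /=; ring.
  have nz2 : c2 != 0.
    apply/eqP => c0; apply: fpnz; rewrite e2 c0.
    by apply: pt_eq; rewrite /scale /=; ring.
  exists (c2 / c1); first by rewrite mulf_neq0 ?invr_eq0.
  by rewrite e1 e2; apply: pt_eq; rewrite /scale /=; field.
have HL := line_fiber hchar hom hl hmm (img l m hA hLi)
  (fibgen l m m' hLi (img l m hA hLi) fm fm' hmm) hcard hjac.
have HL' := line_fiber hchar hom hl' hmm' (img l' m' hB hL'i)
  (fibgen l' m' m hL'i (img l' m' hB hL'i) fm' fm hmm') hcard hjac.
case: hcard => s [hs hsin hsd _].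
have h0s : (0 < size s)%N by rewrite hs; lia.
have h1s : (1 < size s)%N by rewrite hs; lia.
have [nz0 S0] := hsin _ (mem_nth (0,0,0) h0s).
have [nz1 S1] := hsin _ (mem_nth (0,0,0) h1s).
have hnp := hsd 0%N 1%N h0s h1s ltac:(by []).
have hn := nonprojeq_cross nz0 nz1 hnp.
have [al eal] := lin_cross (HL _ nz0 S0) (HL _ nz1 S1) hn.
have [be ebe] := lin_cross (HL' _ nz0 S0) (HL' _ nz1 S1) hn.
have nal : al != 0.
  by apply/eqP => c0; apply: hl; rewrite eal c0; apply: pt_eq; rewrite /scale /=; ring.
have nbe : be != 0.
  by apply/eqP => c0; apply: hl'; rewrite ebe c0; apply: pt_eq; rewrite /scale /=; ring.
have eqv : forall z, lin l z = 0 <-> lin l' z = 0.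
  move=> z; rewrite eal ebe !lin_scalel; split => /eqP.
    by rewrite mulf_eq0 (negbTE nal) => /eqP ->; rewrite mulr0.
  by rewrite mulf_eq0 (negbTE nbe) => /eqP ->; rewrite mulr0.
apply: hns => y hy; split; apply: zclos_mono => x _ [z [hz lz iz pz]]; exists z.
  by split=> //; apply/eqv.
by split=> //; apply/eqv.
Qed.
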